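(* Let $(A,\mu_A,\alpha_A)$ and $(B,\mu_B,\alpha_B)$ be Hom-associative algebras and $R:B\otimes A\to A\otimes B$ a Hom-twisting map, written $R(b\otimes a)=a_R\otimes b_R$. Define $T:(A\otimes B)\otimes(A\otimes B)\to(A\otimes B)\otimes(A\otimes B)$ by $T((a\otimes b)\otimes(a'\otimes b'))=(a\otimes b_R)\otimes(a'_R\otimes b')$. Then $T$ is a Hom-twistor for the tensor product Hom-associative algebra $(A\otimes B,\mu_{A\otimes B},\alpha_A\otimes\alpha_B)$. Consequently $A\otimes_R B:=(A\otimes B)^T$, with multiplication $(a\otimes b)(a'\otimes b')=aa'_R\otimes b_Rb'$ and structure map $\alpha_A\otimes\alpha_B$, is a Hom-associative algebra.
   Context: Algebras over a field $k$, not assumed unital. A Hom-associative algebra is $(A,\mu,\alpha)$ with $\mu(a\otimes a')=aa'$, $\alpha(aa')=\alpha(a)\alpha(a')$, $\alpha(a)(a'a'')=(aa')\alpha(a'')$. The tensor product of Hom-associative algebras $A,B$ is $A\otimes B$ with $(a\otimes b)(a'\otimes b')=aa'\otimes bb'$ and structure map $\alpha_A\otimes\alpha_B$. A Hom-twisting map between $A$ and $B$ is a linear $R:B\otimes A\to A\otimes B$ with $(\alpha_A\otimes\alpha_B)\circ R=R\circ(\alpha_B\otimes\alpha_A)$, $R\circ(\alpha_B\otimes\mu_A)=(\mu_A\otimes\alpha_B)\circ(\mathrm{id}_A\otimes R)\circ(R\otimes\mathrm{id}_A)$, $R\circ(\mu_B\otimes\alpha_A)=(\alpha_A\otimes\mu_B)\circ(R\otimes\mathrm{id}_B)\circ(\mathrm{id}_B\otimes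 R)$. For a Hom-associative algebra $(D,\mu,\alpha)$ and linear $T:D\otimes D\to D\otimes D$ written $T(d\otimes d')=d^T\otimes d'_T$, let $T_{12}=T\otimes\mathrm{id}$, $T_{23}=\mathrm{id}\otimes T$, $T_{13}(d\otimes d'\otimes d'')=d^T\otimes d'\otimes d''_T$; $T$ is a Hom-twistor if $(\alpha\otimes\alpha)\circ T=T\circ(\alpha\otimes\alpha)$, $T\circ(\alpha\otimes\mu)=(\alpha\otimes\mu)\circ T_{13}\circ T_{12}$, $T\circ(\mu\otimes\alpha)=(\mu\otimes\alpha)\circ T_{13}\circ T_{23}$, $T_{12}\circ T_{23}=T_{23}\circ T_{12}$; and $D^T$ denotes $(D,\mu\circ T,\alpha)$. *)

(* Defs.v *)
From HB Require Import structures.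
From Stdlib Require Import ClassicalEpsilon.
From mathcomp Require Import all_boot all_order all_algebra.
From mathcomp Require Import finmap.
From mathcomp Require Import monalg.

Set Implicit Arguments.
Unset Strict Implicit.
Unset Printing Implicit Defensive.

Import GRing.Theory.
Local Open Scope ring_scope.
Local Open Scope quotient_scope.

(* Tensor product U (x) V of two vector spaces over a field K, constructed   *)
(* as the free K-module on U * V modulo the subspace spanned by the         *)
(* bilinearity relations.                                                   *)

Section Tensor.
Variables (K : fieldType) (U V : lmodType K).

Definition tfree := {malg K[(U * V)%type]}.

Definition tgen (u : U) (v : V) : tfree := mkmalgU (u, v) 1.

Inductive tensor_rel : tfree -> Prop :=
  | trel0 : tensor_rel 0
  | trelD x y : tensor_rel x -> tensor_rel y -> tensor_rel (x + y)
  | trelZ (a : K) x : tensor_rel x -> tensor_rel (a *: x)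
  | trelDl u1 u2 v : tensor_rel (tgen (u1 + u2) v - tgen u1 v - tgen u2 v)
  | trelDr u v1 v2 : tensor_rel (tgen u (v1 + v2) - tgen u v1 - tgen u v2)
  | trelZl (a : K) u v : tensor_rel (tgen (a *: u) v - a *: tgen u v)
  | trelZr (a : K) u v : tensor_rel (tgen u (a *: v) - a *: tgen u v).

Definition tensor_relb (x : tfree) : bool :=
  if excluded_middle_informative (tensor_rel x) then true else false.

Lemma tensor_relbP x : reflect (tensor_rel x) (tensor_relb x).
Proof.
rewrite /tensor_relb; case: excluded_middle_informative => h.
  by constructor.
by constructor.
Qed.

Definition tensor_pred : {pred tfree} := tensor_relb.

Lemma tensor_pred_zmod : zmod_closed tensor_pred.
Proof.
split.
  by apply/tensor_relbP; exact: trel0.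
move=> x y /tensor_relbP hx /tensor_relbP hy; apply/tensor_relbP.
apply: trelD => //; rewrite -scaleN1r; exact: trelZ.
Qed.

HB.instance Definition _ := GRing.isZmodClosed.Build tfree tensor_pred
  tensor_pred_zmod.

Import Quotient.

Definition tensor := {quot tensor_pred}.
HB.instance Definition _ := GRing.Zmodule.on tensor.
HB.instance Definition _ := Choice.on tensor.
HB.instance Definition _ : EqQuotient tfree (equiv tensor_pred) tensor :=
  EqQuotient.on tensor.

Definition tscale (a : K) : tensor -> tensor :=
  lift_op1 tensor (fun x => a *: x).

Lemma pi_tscale a : {morph \pi_tensor : x / a *: x >-> tscale a x}.
Proof.
move=> x; rewrite /tscale; unlock; apply/eqP; rewrite piE equivE.
rewrite -scalerBr; apply/tensor_relbP; apply: trelZ; apply/tensor_relbP.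
have := (idealrBE tensor_pred x (repr (\pi_tensor x))).
rewrite reprK eqxx; exact.
Qed.
Canonical pi_tscale_morph a := PiMorph1 (pi_tscale a).

Lemma tscaleA a b v : tscale a (tscale b v) = tscale (a * b) v.
Proof. by rewrite -[v]reprK !piE scalerA. Qed.

Lemma tscale1 : left_id 1 tscale.
Proof. by move=> v; rewrite -[v]reprK !piE scale1r. Qed.

Lemma tscaleDr : right_distributive tscale +%R.
Proof.
by move=> a u v; rewrite -[u]reprK -[v]reprK !piE scalerDr.
Qed.

Lemma tscaleDl v : {morph tscale^~ v : a b / a + b}.
Proof. by move=> a b; rewrite -[v]reprK !piE scalerDl. Qed.

HB.instance Definition _ :=
  GRing.Zmodule_isLmodule.Build K tensor tscaleA tscale1 tscaleDr tscaleDl.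

Definition tens (u : U) (v : V) : tensor := \pi_tensor (tgen u v).

(* For f : U -> V -> W, [tlift f] is the map U (x) V -> W sending         *)
(* u (x) v to f u v (well defined, and linear, as soon as f is bilinear).  *)
Definition tlift (W : lmodType K) (f : U -> V -> W) (t : tensor) : W :=
  let x := repr t in \sum_(p <- msupp x) x@_p *: f p.1 p.2.

End Tensor.

Arguments tens {K U V}.
Arguments tlift {K U V W}.

Definition tmap (K : fieldType) (U V U' V' : lmodType K)
    (f : U -> U') (g : V -> V') : tensor U V -> tensor U' V' :=
  tlift (fun u v => tens (f u) (g v)).

Definition tassoc (K : fieldType) (U V W : lmodType K) :
    tensor (tensor U V) W -> tensor U (tensor V W) :=
  tlift (fun x w => tlift (fun u v => tens u (tens v w)) x).

Definition tassocV (K : fieldType) (U V W : lmodType K) :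
    tensor U (tensor V W) -> tensor (tensor U V) W :=
  tlift (fun u y => tlift (fun v w => tens (tens u v) w) y).

(* mu : A (x) A -> A is given as the bilinear map (a, a') |-> a a'; as a     *)
(* linear map on A (x) A it is [tlift mul].                                  *)

Definition bilinear_map (K : fieldType) (U V W : lmodType K)
    (f : U -> V -> W) : Prop :=
  (forall v, linear (fun u => f u v)) /\ (forall u, linear (f u)).

Definition hom_assoc (K : fieldType) (A : lmodType K)
    (mul : A -> A -> A) (alpha : A -> A) : Prop :=
  [/\ bilinear_map mul, linear alpha,
      (forall a a', alpha (mul a a') = mul (alpha a) (alpha a')) &
      (forall a a' a'', mul (alpha a) (mul a' a'') = mul (mul a a') (alpha a''))].

(* bracketed to the left; associativity isomorphisms are inserted where the *)
(* maps id (x) R etc. require it.                                           *)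
Definition hom_twisting (K : fieldType) (A B : lmodType K)
    (mulA : A -> A -> A) (alphaA : A -> A)
    (mulB : B -> B -> B) (alphaB : B -> B)
    (R : tensor B A -> tensor A B) : Prop :=
  [/\ linear R,
      (forall t, tmap alphaA alphaB (R t) = R (tmap alphaB alphaA t)),
      (forall t : tensor (tensor B A) A,
         R (tmap alphaB (tlift mulA) (tassoc t))
         = tmap (tlift mulA) alphaB
             (tassocV (tmap id R (tassoc (tmap R id t))))) &
      (forall t : tensor (tensor B B) A,
         R (tmap (tlift mulB) alphaA t)
         = tmap alphaA (tlift mulB)
             (tassoc (tmap R id (tassocV (tmap id R (tassoc t))))))].

Definition T12 (K : fieldType) (D : lmodType K)
    (T : tensor D D -> tensor D D) : tensor (tensor D D) D -> tensor (tensor D D) D :=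
  tmap T id.

Definition T23 (K : fieldType) (D : lmodType K)
    (T : tensor D D -> tensor D D) : tensor (tensor D D) D -> tensor (tensor D D) D :=
  fun t => tassocV (tmap id T (tassoc t)).

Definition S23 (K : fieldType) (D : lmodType K) :
    tensor (tensor D D) D -> tensor (tensor D D) D :=
  tlift (fun x d'' => tlift (fun d d' => tens (tens d d'') d') x).

(* T_13 (d (x) d' (x) d'') = d^T (x) d' (x) d''_T *)
Definition T13 (K : fieldType) (D : lmodType K)
    (T : tensor D D -> tensor D D) : tensor (tensor D D) D -> tensor (tensor D D) D :=
  fun t => S23 (T12 T (S23 t)).

Definition hom_twistor (K : fieldType) (D : lmodType K)
    (mul : D -> D -> D) (alpha : D -> D)
    (T : tensor D D -> tensor D D) : Prop :=
  [/\ linear T,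
      (forall t, tmap alpha alpha (T t) = T (tmap alpha alpha t)),
      (forall t : tensor (tensor D D) D,
         T (tmap alpha (tlift mul) (tassoc t))
         = tmap alpha (tlift mul) (tassoc (T13 T (T12 T t)))),
      (forall t : tensor (tensor D D) D,
         T (tmap (tlift mul) alpha t)
         = tmap (tlift mul) alpha (T13 T (T23 T t))) &
      (forall t : tensor (tensor D D) D, T12 T (T23 T t) = T23 T (T12 T t))].

Definition twisted_mul (K : fieldType) (D : lmodType K)
    (mul : D -> D -> D) (T : tensor D D -> tensor D D) : D -> D -> D :=
  fun x y => tlift mul (T (tens x y)).

Definition tensor_mul (K : fieldType) (A B : lmodType K)
    (mulA : A -> A -> A) (mulB : B -> B -> B) :
    tensor A B -> tensor A B -> tensor A B :=
  fun x y => tlift (fun a b => tlift (fun a' b' => tens (mulA a a') (mulB b b')) y) x.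

(* T((a (x) b) (x) (a' (x) b')) = (a (x) b_R) (x) (a'_R (x) b'),            *)
(* where R(b (x) a') = a'_R (x) b_R.                                        *)
Definition twistor_of (K : fieldType) (A B : lmodType K)
    (R : tensor B A -> tensor A B) :
    tensor (tensor A B) (tensor A B) -> tensor (tensor A B) (tensor A B) :=
  tlift (fun x y =>
    tlift (fun a b =>
      tlift (fun a' b' =>
        tlift (fun a'' b'' => tens (tens a b'') (tens a'' b')) (R (tens b a')))
      y) x).

(* Main.v *)
Require Import Defs.
From HB Require Import structures.
From mathcomp Require Import all_boot all_order all_algebra.
From mathcomp Require Import finmap monalg.
Set Implicit Arguments. Unset Strict Implicit. Unset Printing Implicit Defensive.
Import GRing.Theory.
Local Open Scope fset_scope.
Local Open Scope ring_scope.
Local Open Scope quotient_scope.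

Section LinFacts.
Variables (K : fieldType) (X Y : lmodType K) (g : X -> Y) (hg : linear g).
Lemma lin0 : g 0 = 0.
Proof. by have := zmod_morphism_linear hg 0 0; rewrite subrr => ->; rewrite subrr. Qed.
Lemma linD x y : g (x + y) = g x + g y.
Proof. by have := hg 1 x y; rewrite !scale1r. Qed.
Lemma linZ a x : g (a *: x) = a *: g x.
Proof. by have := hg a x 0; rewrite !addr0 lin0 addr0. Qed.
Lemma linN x : g (- x) = - g x.
Proof. by rewrite -scaleN1r linZ scaleN1r. Qed.
Lemma linB x y : g (x - y) = g x - g y.
Proof. by rewrite linD linN. Qed.
Lemma linSum I (r : seq I) (F : I -> X) : g (\sum_(i <- r) F i) = \sum_(i <- r) g (F i).
Proof. elim: r => [|i r ih]; by rewrite ?big_nil ?lin0 // !big_cons linD ih. Qed.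
End LinFacts.

Section Base.
Variables (K : fieldType) (U V : lmodType K).
Import Quotient.

Definition Ff (W : lmodType K) (f : U -> V -> W) (x : tfree U V) : W :=
  \sum_(p <- msupp x) x@_p *: f p.1 p.2.

Lemma FfE (W : lmodType K) (f : U -> V -> W) x (D : {fset (U * V)}) : msupp x `<=` D ->
  Ff f x = \sum_(p <- D) x@_p *: f p.1 p.2.
Proof.
move=> sub; rewrite /Ff; apply: big_fset_incl => // p _ pn.
by rewrite mcoeff_outdom // scale0r.
Qed.

Lemma Ff_lin (W : lmodType K) (f : U -> V -> W) : linear (Ff f).
Proof.
move=> a x y.
have s1 : msupp x `<=` msupp x `|` msupp y by apply: fsubsetUl.
have s2 : msupp y `<=` msupp x `|` msupp y by apply: fsubsetUr.
have s3 : msupp (a *: x + y) `<=` msupp x `|` msupp y.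
  apply: fsubset_trans (msuppD_le _ _) _; apply: fsetSU; exact: msuppZ_le.
rewrite (FfE _ s1) (FfE _ s2) (FfE _ s3) scaler_sumr -big_split /=.
apply: eq_bigr => p _; by rewrite mcoeffD mcoeffZ scalerDl scalerA.
Qed.

Lemma Ff_gen (W : lmodType K) (f : U -> V -> W) u v : Ff f (tgen u v) = f u v.
Proof.
rewrite (FfE _ (@msuppU_le _ _ (u, v) 1)) big_seq_fset1 /tgen mcoeffUU scale1r //.
Qed.

Definition bil (W : lmodType K) (f : U -> V -> W) :=
  (forall v, linear (fun u => f u v)) /\ (forall u, linear (f u)).

Section FL.
Variables (W : lmodType K) (f : U -> V -> W).
Definition FfL := Ff f.
HB.instance Definition _ := GRing.isLinear.Build K (tfree U V) W _ FfL (@Ff_lin W f).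
End FL.

Lemma Ff0 (W : lmodType K) (f : U -> V -> W) : Ff f 0 = 0.
Proof. exact: (raddf0 (FfL f)). Qed.
Lemma FfD (W : lmodType K) (f : U -> V -> W) (x y : tfree U V) : Ff f (x + y) = Ff f x + Ff f y.
Proof. exact: (raddfD (FfL f)). Qed.
Lemma FfB (W : lmodType K) (f : U -> V -> W) (x y : tfree U V) : Ff f (x - y) = Ff f x - Ff f y.
Proof. exact: (raddfB (FfL f)). Qed.
Lemma FfZ (W : lmodType K) (f : U -> V -> W) a (x : tfree U V) : Ff f (a *: x) = a *: Ff f x.
Proof. by rewrite -[a *: x]addr0 Ff_lin Ff0 addr0. Qed.

Lemma Ff_rel (W : lmodType K) (f : U -> V -> W) : bil f ->
  forall x, tensor_rel x -> Ff f x = 0.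
Proof.
move=> [fl fr] x; elim => {x}.
- exact: Ff0.
- by move=> x y _ hx _ hy; rewrite FfD hx hy addr0.
- by move=> a x _ hx; rewrite FfZ hx scaler0.
- move=> u1 u2 v; rewrite !FfB !Ff_gen.
  by rewrite (linD (fl v)) addrAC addrK subrr.
- move=> u v1 v2; rewrite !FfB !Ff_gen.
  by rewrite (linD (fr u)) addrAC addrK subrr.
- move=> a u v; rewrite !FfB FfZ !Ff_gen.
  by rewrite (linZ (fl v)) subrr.
- move=> a u v; rewrite !FfB FfZ !Ff_gen.
  by rewrite (linZ (fr u)) subrr.
Qed.
End Base.


Section Base2.
Variables (K : fieldType) (U V : lmodType K).
Import Quotient.
Local Notation T := (tensor U V).
Definition piT (x : tfree U V) : T := \pi_T x.
Lemma piT_lin : linear piT.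
Proof.
move=> a x y. change (piT (a *: x + y) = @tscale K U V a (piT x) + piT y). rewrite /piT. by rewrite !piE.
Qed.

Lemma tliftE_pi (W : lmodType K) (f : U -> V -> W) : bil f ->
  forall x, tlift f (piT x) = Ff f x.
Proof.
move=> hf x; change (Ff f (repr (piT x)) = Ff f x).
have h : (repr (piT x) - x) \in @tensor_pred K U V.
  by rewrite idealrBE /piT reprK.
move/tensor_relbP: h => /(Ff_rel hf); rewrite FfB => /eqP; rewrite subr_eq0 => /eqP //.
Qed.

Lemma tliftE (W : lmodType K) (f : U -> V -> W) : bil f ->
  forall u v, tlift f (tens u v) = f u v.
Proof. by move=> hf u v; rewrite (tliftE_pi hf (tgen u v)) Ff_gen. Qed.

Lemma tlift_lin (W : lmodType K) (f : U -> V -> W) : bil f -> linear (tlift f).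
Proof.
move=> hf a t s; rewrite -[t]reprK -[s]reprK.
have -> : \pi_T (repr t) = piT (repr t) by [].
have -> : \pi_T (repr s) = piT (repr s) by [].
by rewrite -piT_lin !tliftE_pi // Ff_lin.
Qed.

Lemma tlift_fun (W : lmodType K) (f g : U -> V -> W) a t :
  tlift (fun u v => a *: f u v + g u v) t = a *: tlift f t + tlift g t.
Proof.
rewrite /tlift scaler_sumr -big_split /=; apply: eq_bigr => p _.
by rewrite scalerDr !scalerA mulrC.
Qed.

Lemma tlift_ext (W : lmodType K) (f g : U -> V -> W) t :
  (forall u v, f u v = g u v) -> tlift f t = tlift g t.
Proof. by move=> e; rewrite /tlift; apply: eq_bigr => p _; rewrite e. Qed.

Lemma tlift_tens t : tlift (@tens K U V) t = t.
Proof.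
rewrite /tlift /tens.
have -> : \sum_(p <- msupp (repr t)) (repr t)@_p *: \pi_T (tgen p.1 p.2)
   = \sum_(p <- msupp (repr t)) piT ((repr t)@_p *: tgen p.1 p.2).
  apply: eq_bigr => p _; symmetry; exact: (linZ piT_lin).
transitivity (piT (\sum_(p <- msupp (repr t)) (repr t)@_p *: tgen p.1 p.2)).
  by rewrite (linSum piT_lin).
rewrite /piT -[RHS]reprK; congr (\pi_T _).
rewrite [RHS]monalgE; apply: eq_bigr => -[u v] _ /=.
apply/malgP => k; rewrite mcoeffZ /tgen !mcoeffU.
by case: (_ == _); rewrite ?mulr1n ?mulr0n ?mulr1 ?mulr0.
Qed.

Lemma ext_tens (W : lmodType K) (g : T -> W) : linear g ->
  forall t, g t = tlift (fun u v => g (tens u v)) t.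
Proof.
move=> hg t; rewrite -{1}(tlift_tens t) /tlift (linSum hg).
by apply: eq_bigr => p _; rewrite (linZ hg).
Qed.

Lemma ext2 (W : lmodType K) (g h : T -> W) : linear g -> linear h ->
  (forall u v, g (tens u v) = h (tens u v)) -> forall t, g t = h t.
Proof.
move=> hg hh e t; rewrite (ext_tens hg) (ext_tens hh); exact: tlift_ext.
Qed.
End Base2.


Section Lin.
Variable K : fieldType.
Import Quotient.
Implicit Types U V W X Y Z : lmodType K.

Lemma lin_comp X Y Z (f : Y -> Z) (g : X -> Y) :
  linear f -> linear g -> linear (fun x => f (g x)).
Proof. by move=> hf hg a x y; rewrite hg hf. Qed.

Lemma lin_id X : linear (fun x : X => x).
Proof. by []. Qed.

Lemma piT_rel U V x : tensor_rel x -> @piT K U V x = 0.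
Proof.
move=> h; have : (x - 0) \in @tensor_pred K U V by rewrite subr0; apply/tensor_relbP.
rewrite idealrBE => /eqP; rewrite -[\pi_(tensor U V) 0]/(piT 0) (lin0 (@piT_lin K U V)).
by [].
Qed.

Lemma piT_relE U V x y : tensor_rel (x - y) -> @piT K U V x = piT y.
Proof. by move=> /piT_rel; rewrite (linB (@piT_lin K U V)) => /eqP; rewrite subr_eq0 => /eqP. Qed.

Lemma zeq (G : zmodType) (A B C D : G) : (A - B - C) + (B - D) = A - (D + C).
Proof. rewrite opprD -!addrA; congr (_ + _). rewrite [RHS]addrC addrCA. congr (_ + _). by rewrite addKr. Qed.

Lemma bil_tens U V : bil (@tens K U V).
Proof.
split=> [v|u] a x y; rewrite /tens -!/(piT _) -(linZ (@piT_lin K U V)) -(linD (@piT_lin K U V));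
  apply: piT_relE.
- rewrite -(zeq _ (tgen (a *: x) v)); apply: trelD; [exact: trelDl | exact: trelZl].
- rewrite -(zeq _ (tgen u (a *: x))); apply: trelD; [exact: trelDr | exact: trelZr].
Qed.
End Lin.


Section Lin2.
Variable K : fieldType.
Implicit Types U V W X Y Z : lmodType K.

Lemma lin_tensl U V (v : V) : linear (fun u : U => tens u v).
Proof. exact: (bil_tens U V).1. Qed.
Lemma lin_tensr U V (u : U) : linear (fun v : V => tens u v).
Proof. exact: (bil_tens U V).2. Qed.

Lemma lin_tensl_c X U V (v : V) (g : X -> U) : linear g -> linear (fun x => tens (g x) v).
Proof. by move=> hg; exact: (lin_comp (lin_tensl v) hg). Qed.
Lemma lin_tensr_c X U V (u : U) (g : X -> V) : linear g -> linear (fun x => tens u (g x)).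
Proof. by move=> hg; exact: (lin_comp (lin_tensr u) hg). Qed.
Lemma lin_tlift_c X U V W (f : U -> V -> W) (g : X -> tensor U V) :
  bil f -> linear g -> linear (fun x => tlift f (g x)).
Proof. by move=> hf hg; exact: (lin_comp (tlift_lin hf) hg). Qed.

Lemma lin_tlift_f X U V W (F : X -> U -> V -> W) (t : tensor U V) :
  (forall u v, linear (fun z => F z u v)) -> linear (fun z => tlift (F z) t).
Proof.
move=> h a x y; rewrite -tlift_fun; apply: tlift_ext => u v; exact: h.
Qed.

Lemma bil_tmap U V U' V' (f : U -> U') (g : V -> V') : linear f -> linear g ->
  bil (fun u v => tens (f u) (g v)).
Proof.
move=> hf hg; split=> [v|u]; [exact: lin_tensl_c | exact: lin_tensr_c].
Qed.

Lemma lin_tmap U V U' V' (f : U -> U') (g : V -> V') : linear f -> linear g ->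
  linear (tmap f g).
Proof. by move=> hf hg; apply: tlift_lin; apply: bil_tmap. Qed.

Lemma tmapE U V U' V' (f : U -> U') (g : V -> V') : linear f -> linear g ->
  forall u v, tmap f g (tens u v) = tens (f u) (g v).
Proof. by move=> hf hg u v; rewrite /tmap tliftE //; apply: bil_tmap. Qed.

Lemma lin_tmap_f X U V U' V' (f : X -> U -> U') (g : V -> V') (t : tensor U V) :
  (forall u, linear (fun z => f z u)) -> linear (fun z => tmap (f z) g t).
Proof.
move=> h; rewrite /tmap; apply: lin_tlift_f => u v; exact: lin_tensl_c.
Qed.

Lemma bil_tassoc_in U V W (w : W) : bil (fun (u : U) (v : V) => tens u (tens v w)).
Proof.
split=> [v|u]; first exact: lin_tensl.
apply: lin_tensr_c; exact: lin_tensl.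
Qed.

Lemma bil_tassoc U V W : bil (fun (x : tensor U V) (w : W) => tlift (fun u v => tens u (tens v w)) x).
Proof.
split=> [w|x]; first by apply: tlift_lin; exact: bil_tassoc_in.
apply: lin_tlift_f => u v; apply: lin_tensr_c; exact: lin_tensr.
Qed.

Lemma lin_tassoc U V W : linear (@tassoc K U V W).
Proof. apply: tlift_lin; exact: bil_tassoc. Qed.

Lemma tassocE U V W (u : U) (v : V) (w : W) : tassoc (tens (tens u v) w) = tens u (tens v w).
Proof. by rewrite /tassoc tliftE ?tliftE //; [exact: bil_tassoc_in | exact: bil_tassoc]. Qed.

Lemma bil_tassocV_in U V W (u : U) : bil (fun (v : V) (w : W) => tens (tens u v) w).
Proof.
split=> [w|v]; last exact: lin_tensr.
apply: lin_tensl_c; exact: lin_tensr.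
Qed.

Lemma bil_tassocV U V W : bil (fun (u : U) (y : tensor V W) => tlift (fun v w => tens (tens u v) w) y).
Proof.
split=> [y|u]; last by apply: tlift_lin; exact: bil_tassocV_in.
apply: lin_tlift_f => v w; apply: lin_tensl_c; exact: lin_tensl.
Qed.

Lemma lin_tassocV U V W : linear (@tassocV K U V W).
Proof. apply: tlift_lin; exact: bil_tassocV. Qed.

Lemma tassocVE U V W (u : U) (v : V) (w : W) : tassocV (tens u (tens v w)) = tens (tens u v) w.
Proof. by rewrite /tassocV tliftE ?tliftE //; [exact: bil_tassocV_in | exact: bil_tassocV]. Qed.

Lemma ext3 U V W Y (g h : tensor (tensor U V) W -> Y) : linear g -> linear h ->
  (forall u v w, g (tens (tens u v) w) = h (tens (tens u v) w)) -> forall t, g t = h t.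
Proof.
move=> hg hh e; apply: ext2 => // x w.
apply: (ext2 (g := fun x => g (tens x w)) (h := fun x => h (tens x w))) => //;
  [apply: (lin_comp hg) | apply: (lin_comp hh)]; exact: lin_tensl.
Qed.

Lemma ext3' U V W Y (g h : tensor U (tensor V W) -> Y) : linear g -> linear h ->
  (forall u v w, g (tens u (tens v w)) = h (tens u (tens v w))) -> forall t, g t = h t.
Proof.
move=> hg hh e; apply: ext2 => // u y.
apply: (ext2 (g := fun y => g (tens u y)) (h := fun y => h (tens u y))) => //;
  [apply: (lin_comp hg) | apply: (lin_comp hh)]; exact: lin_tensr.
Qed.

Lemma tassocK U V W (t : tensor U (tensor V W)) : tassoc (tassocV t) = t.
Proof.
apply: (ext3' (g := fun t => tassoc (tassocV t)) (h := id)) => //.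
  exact: (lin_comp (@lin_tassoc U V W) (@lin_tassocV U V W)).
by move=> u v w; rewrite tassocVE tassocE.
Qed.

Lemma tassocVK U V W (t : tensor (tensor U V) W) : tassocV (tassoc t) = t.
Proof.
apply: (ext3 (g := fun t => tassocV (tassoc t)) (h := id)) => //.
  exact: (lin_comp (@lin_tassocV U V W) (@lin_tassoc U V W)).
by move=> u v w; rewrite tassocE tassocVE.
Qed.

End Lin2.


Section Lin3.
Variable K : fieldType.
Implicit Types U V W X Y Z : lmodType K.

Lemma lin_tmap_c X U V U' V' (f : U -> U') (g : V -> V') (h : X -> tensor U V) :
  linear f -> linear g -> linear h -> linear (fun x => tmap f g (h x)).
Proof. by move=> hf hg hh; exact: (lin_comp (lin_tmap hf hg) hh). Qed.
Lemma lin_tassoc_c X U V W (h : X -> tensor (tensor U V) W) :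
  linear h -> linear (fun x => tassoc (h x)).
Proof. by move=> hh; exact: (lin_comp (@lin_tassoc K U V W) hh). Qed.
Lemma lin_tassocV_c X U V W (h : X -> tensor U (tensor V W)) :
  linear h -> linear (fun x => tassocV (h x)).
Proof. by move=> hh; exact: (lin_comp (@lin_tassocV K U V W) hh). Qed.
Lemma lin_bil_l X U V W (f : U -> V -> W) (g : X -> U) v :
  bil f -> linear g -> linear (fun x => f (g x) v).
Proof. by move=> [hf _] hg; exact: (lin_comp (hf v) hg). Qed.
Lemma lin_bil_r X U V W (f : U -> V -> W) (g : X -> V) u :
  bil f -> linear g -> linear (fun x => f u (g x)).
Proof. by move=> [_ hf] hg; exact: (lin_comp (hf u) hg). Qed.
Lemma lin_bil_l' U V W (f : U -> V -> W) v : bil f -> linear (fun x => f x v).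
Proof. by case. Qed.
Lemma lin_bil_r' U V W (f : U -> V -> W) u : bil f -> linear (f u).
Proof. by case. Qed.
Lemma lin_hyp_c X Y Z (F : Y -> Z) (g : X -> Y) : linear F -> linear g -> linear (fun x => F (g x)).
Proof. exact: lin_comp. Qed.

End Lin3.

Ltac findlin F := match goal with H : linear ?F' |- _ => constr_eq F F'; exact H end.
Ltac findbil F := match goal with
  | H : bil ?F' |- _ => constr_eq F F'; exact H
  | H : bilinear_map ?F' |- _ => constr_eq F F'; exact H end.
Ltac linstep :=
  cbv beta;
  match goal with
  | |- bil _ => split; intro
  | |- linear (fun x => x) => exact: lin_id
  | |- linear id => exact: lin_id
  | |- linear (tens ?u) => exact: lin_tensr
  | |- linear (fun x => tens x ?v) => exact: lin_tensl
  | |- linear (fun x => tens (@?g x) ?v) => apply: (lin_tensl_c v)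
  | |- linear (fun x => tens ?u (@?g x)) => apply: (lin_tensr_c u)
  | |- linear (@tassoc _ _ _ _) => exact: lin_tassoc
  | |- linear (@tassocV _ _ _ _) => exact: lin_tassocV
  | |- linear (fun x => tassoc (@?g x)) => apply: lin_tassoc_c
  | |- linear (fun x => tassocV (@?g x)) => apply: lin_tassocV_c
  | |- linear (tmap ?f ?g) => apply: lin_tmap
  | |- linear (fun x => tmap ?f ?g (@?h x)) => apply: lin_tmap_c
  | |- linear (tlift ?f) => apply: tlift_lin
  | |- linear (fun x => tlift ?f (@?g x)) => apply: (lin_tlift_c (f := f))
  | |- linear (fun x => tlift (@?F x) ?t) => apply: lin_tlift_f; intros
  | |- bil ?F => findbil F
  | |- linear ?F => findlin F
  | |- linear (fun x => ?F (@?g x)) => apply: (lin_comp (f := F)); [findlin F|]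
  | |- linear (?F ?u) => apply: (lin_bil_r' u); findbil F
  | |- linear (fun x => ?F x ?v) => apply: (lin_bil_l' v); findbil F
  | |- linear (fun x => ?F (@?g x) ?v) => apply: (lin_bil_l v); [findbil F|]
  | |- linear (fun x => ?F ?u (@?g x)) => apply: (lin_bil_r u); [findbil F|]
  end.
Ltac linsolve := repeat linstep.


Section Gen.
Variables (K : fieldType) (D : lmodType K).

Lemma bil_S23_in (d'' : D) : bil (fun d d' : D => tens (tens d d'') d').
Proof. linsolve. Qed.
Lemma bil_S23 : bil (fun (x : tensor D D) (d'' : D) => tlift (fun d d' => tens (tens d d'') d') x).
Proof. split => v. apply: tlift_lin. exact: bil_S23_in. linsolve. Qed.
Lemma lin_S23 : linear (@S23 K D).
Proof. apply: tlift_lin; exact: bil_S23. Qed.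
Lemma S23E (d d' d'' : D) : S23 (tens (tens d d') d'') = tens (tens d d'') d'.
Proof. by rewrite /S23 tliftE ?tliftE //; [exact: bil_S23_in | exact: bil_S23]. Qed.
Lemma S23K t : @S23 K D (S23 t) = t.
Proof.
apply: (ext3 (g := fun t => S23 (S23 t)) (h := id)) => //.
  exact: (lin_comp lin_S23 lin_S23).
by move=> u v w; rewrite !S23E.
Qed.

Variable T : tensor D D -> tensor D D.
Hypothesis hT : linear T.

Lemma lin_T12 : linear (T12 T).
Proof. rewrite /T12; linsolve. Qed.
Lemma T12E x (z : D) : T12 T (tens x z) = tens (T x) z.
Proof. by rewrite /T12 tmapE //; linsolve. Qed.
Lemma lin_T23 : linear (T23 T).
Proof. rewrite /T23; linsolve. Qed.
Lemma T23E (x : D) y z : T23 T (tens (tens x y) z) = tassocV (tens x (T (tens y z))).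
Proof. by rewrite /T23 tassocE tmapE //; linsolve. Qed.
Lemma lin_T13 : linear (T13 T).
Proof. rewrite /T13; apply: (lin_comp lin_S23); apply: (lin_comp lin_T12); exact: lin_S23. Qed.
Lemma T13E (x y z : D) : T13 T (tens (tens x y) z) = S23 (tens (T (tens x z)) y).
Proof. rewrite /T13; congr S23; rewrite (S23E x y z); exact: T12E. Qed.

Lemma twisted_hom_assoc (mul : D -> D -> D) (alpha : D -> D) :
  hom_assoc mul alpha -> hom_twistor mul alpha T ->
  hom_assoc (twisted_mul mul T) alpha.
Proof.
case=> hm ha hmul hass [_ hTa hT3 hT4 hT5].
have hmL : linear (tlift mul) by apply: tlift_lin.
have hbt : bil (twisted_mul mul T).
  by rewrite /twisted_mul; split=> v; apply: (lin_comp hmL); apply: (lin_comp hT); linsolve.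
split => //.
- move=> x y; rewrite /twisted_mul.
  have -> : alpha (tlift mul (T (tens x y))) = tlift mul (tmap alpha alpha (T (tens x y))).
    move: (T (tens x y)); apply: ext2; [linsolve | linsolve |] => u v.
    by rewrite tmapE // !tliftE.
  by rewrite hTa tmapE.
- move=> x y z; rewrite /twisted_mul.
  have e1 : tens (alpha x) (tlift mul (T (tens y z)))
      = tmap alpha (tlift mul) (tassoc (T23 T (tens (tens x y) z))).
    by rewrite T23E tassocK tmapE.
  have e2 : tens (tlift mul (T (tens x y))) (alpha z)
      = tmap (tlift mul) alpha (T12 T (tens (tens x y) z)).
    by rewrite T12E tmapE.
  rewrite e1 e2 hT3 hT4 -hT5.
  move: (T13 T _); apply: ext3; [linsolve | linsolve |] => u v w.
  by rewrite tassocE !tmapE // !tliftE.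
Qed.
End Gen.


Section Ext.
Variable K : fieldType.
Implicit Types U V W X Y Z : lmodType K.

Lemma ext22 U V U' V' W (g h : tensor (tensor U V) (tensor U' V') -> W) :
  linear g -> linear h ->
  (forall a b a' b', g (tens (tens a b) (tens a' b')) = h (tens (tens a b) (tens a' b'))) ->
  forall t, g t = h t.
Proof.
move=> hg hh e; apply: ext2 => // x y; move: x.
apply: ext2; [linsolve | linsolve |] => a b; move: y.
apply: ext2; [linsolve | linsolve |] => a' b'; exact: e.
Qed.

Lemma ext333 U V W (g h : tensor (tensor (tensor U V) (tensor U V)) (tensor U V) -> W) :
  linear g -> linear h ->
  (forall a1 b1 a2 b2 a3 b3,
     g (tens (tens (tens a1 b1) (tens a2 b2)) (tens a3 b3))
     = h (tens (tens (tens a1 b1) (tens a2 b2)) (tens a3 b3))) ->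
  forall t, g t = h t.
Proof.
move=> hg hh e; apply: ext3 => // x y z; move: x.
apply: ext2; [linsolve | linsolve |] => a1 b1; move: y.
apply: ext2; [linsolve | linsolve |] => a2 b2; move: z.
apply: ext2; [linsolve | linsolve |] => a3 b3; exact: e.
Qed.
End Ext.


Ltac rw E := lazymatch type of E with ?l = ?r =>
  pattern l; refine (@eq_ind_r _ r _ _ l E); cbv beta end.

Ltac rwt t0 E := let r := lazymatch type of E with _ = ?r => r end in
  progress (pattern t0; refine (@eq_ind_r _ r _ _ t0 (E : t0 = r)); cbv beta).

Ltac sidesolve := linsolve.
Ltac rstep t0 :=
  match t0 with
  | tassoc (tens (tens ?u ?v) ?w) => rwt t0 (tassocE u v w)
  | tassocV (tens ?u (tens ?v ?w)) => rwt t0 (tassocVE u v w)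
  | S23 (tens (tens ?u ?v) ?w) => rwt t0 (S23E u v w)
  | tmap ?f ?g (tens ?u ?v) =>
      let h1 := fresh in let h2 := fresh in
      assert (h1 : linear f) by (solve [sidesolve]);
      assert (h2 : linear g) by (solve [sidesolve]);
      rwt t0 (tmapE h1 h2 u v); clear h1 h2
  | tlift ?f (tens ?u ?v) =>
      let h := fresh in assert (h : bil f) by (solve [sidesolve]);
      rwt t0 (tliftE h u v); clear h
  | T12 ?T (tens ?x ?z) =>
      let h := fresh in assert (h : linear T) by (solve [sidesolve]);
      rwt t0 (T12E h x z); clear h
  | T23 ?T (tens (tens ?x ?y) ?z) =>
      let h := fresh in assert (h : linear T) by (solve [sidesolve]);
      rwt t0 (T23E h x y z); clear h
  | T13 ?T (tens (tens ?x ?y) ?z) =>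
      let h := fresh in assert (h : linear T) by (solve [sidesolve]);
      rwt t0 (T13E h x y z); clear h
  end.

Section Main.
Variables (K : fieldType) (A B : lmodType K)
    (mulA : A -> A -> A) (alphaA : A -> A)
    (mulB : B -> B -> B) (alphaB : B -> B)
    (R : tensor B A -> tensor A B).
Hypothesis hmA : bil mulA.
Hypothesis haA : linear alphaA.
Hypothesis hmB : bil mulB.
Hypothesis haB : linear alphaB.
Hypothesis hR : linear R.

Definition rho (a : A) (b' : B) (r : tensor A B) : tensor (tensor A B) (tensor A B) :=
  tlift (fun a'' b'' => tens (tens a b'') (tens a'' b')) r.

Lemma bil_rho_in (a : A) (b' : B) : bil (fun (a'' : A) (b'' : B) => tens (tens a b'') (tens a'' b')).
Proof. linsolve. Qed.
Lemma lin_rho a b' : linear (rho a b').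
Proof. rewrite /rho; linsolve. Qed.
Lemma rhoE a b' (p : A) (q : B) : rho a b' (tens p q) = tens (tens a q) (tens p b').
Proof. by rewrite /rho tliftE //; linsolve. Qed.

Lemma bil_mulD : bil (tensor_mul mulA mulB).
Proof. rewrite /tensor_mul; linsolve. Qed.
Lemma mulDE a b a' b' : tensor_mul mulA mulB (tens a b) (tens a' b') = tens (mulA a a') (mulB b b').
Proof. rewrite /tensor_mul. rewrite tliftE; [rewrite tliftE //|]; linsolve. Qed.

Lemma lin_Tw : linear (twistor_of R).
Proof. rewrite /twistor_of; linsolve. Qed.
Lemma TwE a b a' b' : twistor_of R (tens (tens a b) (tens a' b')) = rho a b' (R (tens b a')).
Proof. rewrite /twistor_of. rewrite tliftE; [rewrite tliftE; [rewrite tliftE //|]|]; linsolve. Qed.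

Ltac rstep2 t0 :=
  match t0 with
  | rho ?a ?b (tens ?p ?q) => rwt t0 (rhoE a b p q)
  | tensor_mul mulA mulB (tens ?a ?b) (tens ?a' ?b') => rwt t0 (mulDE a b a' b')
  | twistor_of R (tens (tens ?a ?b) (tens ?a' ?b')) => rwt t0 (TwE a b a' b')
  | _ => rstep t0
  end.
Ltac tstep2 := match goal with |- context [?t0] => rstep2 t0 end.
Ltac tsimp := repeat tstep2.
Ltac linstepM :=
  cbv beta;
  match goal with
  | |- linear (fun x => rho ?a ?b (@?g x)) => apply: (lin_comp (lin_rho a b))
  | |- linear (rho ?a ?b) => exact: (lin_rho a b)
  | |- linear (fun x => T13 ?T (@?g x)) => apply: (lin_comp (lin_T13 _))
  | |- linear (fun x => T12 ?T (@?g x)) => apply: (lin_comp (lin_T12 _))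
  | |- linear (fun x => T23 ?T (@?g x)) => apply: (lin_comp (lin_T23 _))
  | |- linear (T13 ?T) => apply: lin_T13
  | |- linear (T12 ?T) => apply: lin_T12
  | |- linear (T23 ?T) => apply: lin_T23
  | |- linear (fun x => S23 (@?g x)) => apply: (lin_comp (@lin_S23 _ _))
  | |- linear (fun x => rho ?a ?b ?r) => rewrite /rho
  | _ => linstep
  end.
Ltac linsolveM := repeat linstepM.
Ltac sidesolve ::= linsolveM.

Hypothesis hR1 : forall t, tmap alphaA alphaB (R t) = R (tmap alphaB alphaA t).
Hypothesis hR2 : forall t : tensor (tensor B A) A,
         R (tmap alphaB (tlift mulA) (tassoc t))
         = tmap (tlift mulA) alphaB
             (tassocV (tmap id R (tassoc (tmap R id t)))).
Hypothesis hR3 : forall t : tensor (tensor B B) A,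
         R (tmap (tlift mulB) alphaA t)
         = tmap alphaA (tlift mulB)
             (tassoc (tmap R id (tassocV (tmap id R (tassoc t))))).

Lemma R1E b a : R (tens (alphaB b) (alphaA a)) = tmap alphaA alphaB (R (tens b a)).
Proof. rewrite hR1; tsimp; reflexivity. Qed.

Lemma R2E b a a' : R (tens (alphaB b) (mulA a a'))
  = tmap (tlift mulA) alphaB (tassocV (tmap id R (tassoc (tens (R (tens b a)) a')))).
Proof.
have := hR2 (tens (tens b a) a'); tsimp; move=> ->; reflexivity.
Qed.

Lemma R3E b b' a : R (tens (mulB b b') (alphaA a))
  = tmap alphaA (tlift mulB) (tassoc (tmap R id (tassocV (tens b (R (tens b' a)))))).
Proof.
have := hR3 (tens (tens b b') a); tsimp; move=> ->; reflexivity.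
Qed.

Local Notation mulD := (tensor_mul mulA mulB).
Local Notation alD := (tmap alphaA alphaB).
Local Notation Tw := (twistor_of R).

Lemma hom_assoc_D :
  hom_assoc mulA alphaA -> hom_assoc mulB alphaB -> hom_assoc mulD alD.
Proof.
case=> _ _ mA aA; case=> _ _ mB aB.
have hmD := bil_mulD.
split.
- exact: bil_mulD.
- rewrite /alD; linsolve.
- move=> x y; move: x; apply: ext2; [linsolve | linsolve |] => a b.
  move: y; apply: ext2; [linsolve | linsolve |] => a' b'.
  tsimp. by rewrite mA mB.
- move=> x y z; move: x; apply: ext2; [linsolve | linsolve |] => a b.
  move: y; apply: ext2; [linsolve | linsolve |] => a' b'.
  move: z; apply: ext2; [linsolve | linsolve |] => a'' b''.
  tsimp. by rewrite aA aB.
Qed.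

Lemma P2 t : tmap alD alD (Tw t) = Tw (tmap alD alD t).
Proof.
have hTw := lin_Tw.
move: t; apply: ext22; [linsolveM | linsolveM |] => a1 b1 a2 b2.
tsimp. rw (R1E b1 a2).
move: (R (tens b1 a2)); apply: ext2; [linsolveM | linsolveM |] => p q.
tsimp. reflexivity.
Qed.

Lemma P3 t : Tw (tmap alD (tlift mulD) (tassoc t))
  = tmap alD (tlift mulD) (tassoc (T13 Tw (T12 Tw t))).
Proof.
have hTw := lin_Tw. have hmD := bil_mulD.
move: t; apply: ext333; [linsolveM | linsolveM |] => a1 b1 a2 b2 a3 b3.
tsimp. rw (R2E b1 a2 a3).
move: (R (tens b1 a2)); apply: ext2; [linsolveM | linsolveM |] => p q.
tsimp.
move: (R (tens q a3)); apply: ext2; [linsolveM | linsolveM |] => p' q'.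
tsimp. Show. reflexivity.
Qed.

Lemma P4 t : Tw (tmap (tlift mulD) alD t)
  = tmap (tlift mulD) alD (T13 Tw (T23 Tw t)).
Proof.
have hTw := lin_Tw. have hmD := bil_mulD.
move: t; apply: ext333; [linsolveM | linsolveM |] => a1 b1 a2 b2 a3 b3.
tsimp. rw (R3E b1 b2 a3).
move: (R (tens b2 a3)); apply: ext2; [linsolveM | linsolveM |] => p q.
tsimp.
move: (R (tens b1 p)); apply: ext2; [linsolveM | linsolveM |] => p' q'.
tsimp. Show. reflexivity.
Qed.

Lemma P5 t : T12 Tw (T23 Tw t) = T23 Tw (T12 Tw t).
Proof.
have hTw := lin_Tw.
move: t; apply: ext333; [linsolveM | linsolveM |] => a1 b1 a2 b2 a3 b3.
tsimp.
transitivity (tlift (fun p q => tens (rho a1 q (R (tens b1 a2))) (tens p b3)) (R (tens b2 a3))).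
  move: (R (tens b2 a3)); apply: ext2; [linsolveM | linsolveM |] => p q.
  tsimp. reflexivity.
move: (R (tens b1 a2)); apply: ext2; [linsolveM | linsolveM |] => p' q'.
tsimp.
move: (R (tens b2 a3)); apply: ext2; [linsolveM | linsolveM |] => p q.
tsimp. reflexivity.
Qed.

Lemma formulaE a b a' b' :
  twisted_mul mulD Tw (tens a b) (tens a' b')
  = tlift (fun a'' b'' => tens (mulA a a'') (mulB b'' b')) (R (tens b a')).
Proof.
have hmD := bil_mulD.
rewrite /twisted_mul; tsimp.
move: (R (tens b a')); apply: ext2; [linsolveM | linsolveM |] => p q.
tsimp. reflexivity.
Qed.
End Main.

Theorem proposition2p6 (K : fieldType) (A B : lmodType K)
    (mulA : A -> A -> A) (alphaA : A -> A)
    (mulB : B -> B -> B) (alphaB : B -> B)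
    (R : tensor B A -> tensor A B) :
  hom_assoc mulA alphaA ->
  hom_assoc mulB alphaB ->
  hom_twisting mulA alphaA mulB alphaB R ->
  [/\ hom_twistor (tensor_mul mulA mulB) (tmap alphaA alphaB) (twistor_of R),
      hom_assoc (twisted_mul (tensor_mul mulA mulB) (twistor_of R))
                (tmap alphaA alphaB) &
      (forall a b a' b',
         twisted_mul (tensor_mul mulA mulB) (twistor_of R) (tens a b) (tens a' b')
         = tlift (fun a'' b'' => tens (mulA a a'') (mulB b'' b')) (R (tens b a')))].
Proof.
move=> hA hB hR.
have hA' := hA; have hB' := hB.
case: hA' => hmA haA _ _; case: hB' => hmB haB _ _.
case: hR => hRl hR1 hR2 hR3.
have hTw : linear (twistor_of R) by apply: lin_Tw; assumption.
have hT : hom_twistor (tensor_mul mulA mulB) (tmap alphaA alphaB) (twistor_of R).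
  split.
  - exact: hTw.
  - by move=> t; apply: P2; assumption.
  - by move=> t; apply: P3; assumption.
  - by move=> t; apply: P4; assumption.
  - by move=> t; apply: P5; assumption.
split.
- exact: hT.
- apply: twisted_hom_assoc; [exact: hTw | apply: hom_assoc_D; assumption | exact: hT].
- by move=> a b a' b'; apply: formulaE; assumption.
Qed.
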